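(* Let $k>0$, $(a,d)\in(0,1)\times(0,\infty)$, let $g$ satisfy (Hg), and let $(c,\Phi)$ with $c\in\mathbb R$, $\Phi\in C^1(\mathbb R)$ solve $$-c\Phi'(\xi)=d\big(k\Phi(\xi+1)-(k+1)\Phi(\xi)+\Phi(\xi-1)\big)+g(\Phi(\xi);a)\ (\xi\in\mathbb R),\quad \lim_{\xi\to-\infty}\Phi(\xi)=0,\ \lim_{\xi\to+\infty}\Phi(\xi)=1.$$ Suppose there exist $\bar c\in\mathbb R$ and a bounded $\Psi\in C^1(\mathbb R)$ such that (i) $\sup_{\xi}\Psi(\xi)>0$, (ii) $\Psi(\xi)\le\Phi(\xi)$ for all $\xi$, (iii) $\mathcal I_{a,d,k}[\bar c,\Psi](\xi)\le0$ for all $\xi$. Then $c\le\bar c$. Likewise, if (i') $\inf_\xi\Psi(\xi)<1$, (ii') $\Psi(\xi)\ge\Phi(\xi)$ for all $\xi$, (iii') $\mathcal I_{a,d,k}[\bar c,\Psi](\xi)\ge0$ for all $\xi$, then $c\ge\bar c$.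
   Context: For $c\in\mathbb R$ and $\Phi\in C^1(\mathbb R)$, $\mathcal I_{a,d,k}[c,\Phi](\xi):=-c\Phi'(\xi)-d\big(\Phi(\xi-1)-(k+1)\Phi(\xi)+k\Phi(\xi+1)\big)-g(\Phi(\xi);a)$. A function $g:\mathbb R\times[0,1]\to\mathbb R$, $(u,a)\mapsto g(u;a)$, satisfies (Hg) if it is $C^1$ and for every $a\in(0,1)$: $g(0;a)=g(a;a)=g(1;a)=0$, $g'(0;a)<0$, $g'(1;a)<0$, $g'(a;a)>0$ (where $g'=\partial_u g$), $g(v;a)>0$ for $v\in(-\infty,0)\cup(a,1)$ and $g(v;a)<0$ for $v\in(0,a)\cup(1,\infty)$. *)

(* Defs.v *)
From Stdlib Require Import Reals.
From Coquelicot Require Import Coquelicot.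
Open Scope R_scope.

Definition CR1 (f : R -> R) : Prop :=
  (forall x, ex_derive f x) /\ (forall x, continuous (Derive f) x).

Definition jcont_strip (f : R -> R -> R) : Prop :=
  forall u a, 0 <= a <= 1 -> forall eps, 0 < eps -> exists delta, 0 < delta /\
    forall v b, 0 <= b <= 1 -> Rabs (v - u) < delta -> Rabs (b - a) < delta ->
      Rabs (f v b - f u a) < eps.

Definition derive_within01 (h : R -> R) (a l : R) : Prop :=
  forall eps, 0 < eps -> exists delta, 0 < delta /\
    forall b, 0 <= b <= 1 -> b <> a -> Rabs (b - a) < delta ->
      Rabs ((h b - h a) / (b - a) - l) < eps.

Definition CR1_strip (g : R -> R -> R) : Prop :=
  exists gu ga : R -> R -> R,
    (forall u a, 0 <= a <= 1 -> is_derive (fun v => g v a) u (gu u a)) /\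
    (forall u a, 0 <= a <= 1 -> derive_within01 (fun b => g u b) a (ga u a)) /\
    jcont_strip gu /\ jcont_strip ga.

Definition dg (g : R -> R -> R) (u a : R) : R := Derive (fun v => g v a) u.

Definition Hg (g : R -> R -> R) : Prop :=
  CR1_strip g /\
  forall a, 0 < a < 1 ->
    g 0 a = 0 /\ g a a = 0 /\ g 1 a = 0 /\
    dg g 0 a < 0 /\ dg g 1 a < 0 /\ dg g a a > 0 /\
    (forall v, (v < 0 \/ (a < v /\ v < 1)) -> g v a > 0) /\
    (forall v, ((0 < v /\ v < a) \/ 1 < v) -> g v a < 0).

Definition Iop (g : R -> R -> R) (a d k c : R) (Phi : R -> R) (xi : R) : R :=
  - (c * Derive Phi xi)
  - d * (Phi (xi - 1) - (k + 1) * Phi xi + k * Phi (xi + 1))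
  - g (Phi xi) a.

Definition bddR (f : R -> R) : Prop := exists M, forall x, Rabs (f x) <= M.

(* Main.v *)
Require Import Defs.
From Stdlib Require Import Reals Lra Classical.
From Coquelicot Require Import Coquelicot.
Open Scope R_scope.

Lemma cont_of_continuous f x : continuous f x -> continuity_pt f x.
Proof. intros H. apply continuity_pt_filterlim. exact H. Qed.

Lemma lim_m (f : R -> R) l : is_lim f m_infty (Finite l) ->
  forall e, 0 < e -> exists Z, forall z, z < Z -> Rabs (f z - l) < e.
Proof.
  intros H e He. apply is_lim_spec in H. unfold is_lim' in H. simpl in H.
  destruct (H (mkposreal e He)) as [Z HZ]. exists Z. intros z Hz. exact (HZ z Hz).
Qed.

Lemma lim_p (f : R -> R) l : is_lim f p_infty (Finite l) ->
  forall e, 0 < e -> exists Z, forall z, Z < z -> Rabs (f z - l) < e.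
Proof.
  intros H e He. apply is_lim_spec in H. unfold is_lim' in H. simpl in H.
  destruct (H (mkposreal e He)) as [Z HZ]. exists Z. intros z Hz. exact (HZ z Hz).
Qed.

Lemma deriv_left_min (h : R -> R) x l r : is_derive h x l -> 0 < r ->
  (forall y, x - r < y < x -> h x <= h y) -> l <= 0.
Proof.
  intros Hd Hr Hm. apply is_derive_Reals in Hd.
  destruct (Rle_or_lt l 0) as [|Hl]; [assumption|exfalso].
  destruct (Hd l Hl) as [del Hdel].
  set (t := - (Rmin del r / 2)).
  assert (Hp : 0 < Rmin del r) by (apply Rmin_glb_lt; [apply cond_pos|lra]).
  assert (Ht1 : Rmin del r <= del) by apply Rmin_l.
  assert (Ht2 : Rmin del r <= r) by apply Rmin_r.
  assert (Htn : t <> 0) by (unfold t; lra).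
  assert (Hta : Rabs t < del) by (unfold t; rewrite Rabs_left; lra).
  specialize (Hdel t Htn Hta).
  assert (Hq : (h (x + t) - h x) / t <= 0).
  { assert (h x <= h (x + t)) by (apply Hm; unfold t; lra).
    unfold Rdiv. assert (/ t < 0) by (apply Rinv_lt_0_compat; unfold t; lra).
    nra. }
  revert Hdel. apply Rle_not_lt. rewrite Rabs_left1 by lra. lra.
Qed.

Lemma deriv_right_min (h : R -> R) x l r : is_derive h x l -> 0 < r ->
  (forall y, x < y < x + r -> h x <= h y) -> 0 <= l.
Proof.
  intros Hd Hr Hm. apply is_derive_Reals in Hd.
  destruct (Rle_or_lt 0 l) as [|Hl]; [assumption|exfalso].
  destruct (Hd (-l) ltac:(lra)) as [del Hdel].
  set (t := (Rmin del r / 2)).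
  assert (Hp : 0 < Rmin del r) by (apply Rmin_glb_lt; [apply cond_pos|lra]).
  assert (Ht1 : Rmin del r <= del) by apply Rmin_l.
  assert (Ht2 : Rmin del r <= r) by apply Rmin_r.
  assert (Htn : t <> 0) by (unfold t; lra).
  assert (Hta : Rabs t < del) by (unfold t; rewrite Rabs_right; lra).
  specialize (Hdel t Htn Hta).
  assert (Hq : 0 <= (h (x + t) - h x) / t).
  { assert (h x <= h (x + t)) by (apply Hm; unfold t; lra).
    unfold Rdiv. assert (0 < / t) by (apply Rinv_0_lt_compat; unfold t; lra).
    nra. }
  revert Hdel. apply Rle_not_lt. rewrite Rabs_right by lra. lra.
Qed.

Lemma loc_lip (f f' : R -> R) : (forall x, is_derive f x (f' x)) ->
  (forall x, continuity_pt f' x) -> forall R0, exists B, 0 <= B /\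
  forall x y, -R0 <= x <= R0 -> -R0 <= y <= R0 -> Rabs (f x - f y) <= B * Rabs (x - y).
Proof.
  intros Hd Hc R0.
  destruct (Rle_or_lt 0 R0) as [H0|H0].
  2:{ exists 0. split; [lra|]. intros; lra. }
  destruct (continuity_ab_maj (fun x => Rabs (f' x)) (-R0) R0 ltac:(lra)) as [xm [Hxm _]].
  { intros c _. apply (continuity_pt_comp f' Rabs); [apply Hc|apply Rcontinuity_abs]. }
  exists (Rabs (f' xm)). split; [apply Rabs_pos|].
  intros x y Hx Hy.
  destruct (MVT_gen f y x f') as [c [Hc1 Hc2]].
  { intros; apply Hd. }
  { intros z _. apply cont_of_continuous. apply (ex_derive_continuous (K:=R_AbsRing) (V:=R_NormedModule)). eexists; apply Hd. }
  rewrite Hc2, Rabs_mult. apply Rmult_le_compat_r; [apply Rabs_pos|].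
  apply Hxm. split.
  - apply Rle_trans with (Rmin y x); [apply Rmin_glb; lra| lra].
  - apply Rle_trans with (Rmax y x); [lra| apply Rmax_lub; lra].
Qed.

Lemma core (F : R -> R -> R) (T eps M : R) :
  0 <= T -> 0 < eps -> 0 <= M ->
  (forall y, 0 <= F 0 y) ->
  (forall e, 0 < e -> exists X, forall s y, 0 <= s <= T -> X < Rabs y -> -e <= F s y) ->
  (forall X, exists B, 0 <= B /\ forall s1 s2 y, 0 <= s1 <= T -> 0 <= s2 <= T ->
      Rabs y <= X -> Rabs (F s1 y - F s2 y) <= B * Rabs (s1 - s2)) ->
  (forall s y, continuity_pt (F s) y) ->
  (forall s, 0 <= s <= T -> forall y, 0 < F s y + eps * exp (M*s)) \/
  exists s0 y0, 0 < s0 <= T /\ F s0 y0 + eps * exp (M*s0) = 0 /\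
    (forall y, 0 <= F s0 y + eps*exp(M*s0)) /\
    (forall s, 0 <= s < s0 -> forall y, 0 < F s y + eps*exp(M*s)).
Proof.
  intros HT He HM H0 Hinf Hlip Hcy.
  set (P := fun s => forall y, 0 < F s y + eps * exp (M*s)).
  assert (Hexp : forall s1 s2, s1 <= s2 -> exp (M*s1) <= exp (M*s2)).
  { intros s1 s2 H. destruct (Req_dec (M*s1) (M*s2)) as [Heq|Hn]; [rewrite Heq; lra|].
    left. apply exp_increasing. nra. }
  assert (Hexp1 : forall s, 0 <= s -> 1 <= exp (M*s)).
  { intros s Hs. rewrite <- exp_0. replace 0 with (M*0) by ring. apply Hexp; lra. }
  destruct (classic (forall s, 0 <= s <= T -> P s)) as [Hall|Hnall].
  { left. exact Hall. }
  right.
  set (E := fun t => 0 <= t <= T /\ forall s, 0 <= s <= t -> P s).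
  assert (HP0 : P 0).
  { intros y. rewrite Rmult_0_r, exp_0. specialize (H0 y). lra. }
  assert (HE0 : E 0).
  { split; [lra|]. intros s Hs. replace s with 0 by lra. exact HP0. }
  destruct (completeness E) as [s0 [Hub Hlub]].
  { exists T. intros t [Ht _]. lra. }
  { exists 0. exact HE0. }
  assert (Hs0 : 0 <= s0 <= T).
  { split; [apply Hub; exact HE0|]. apply Hlub. intros t [Ht _]. lra. }
  assert (Hbelow : forall s, 0 <= s < s0 -> P s).
  { intros s Hs. destruct (classic (exists t, E t /\ s < t)) as [[t [[_ Ht] Hst]]|Hn].
    - apply Ht. lra.
    - exfalso. assert (s0 <= s); [|lra]. apply Hlub. intros t Ht.
      destruct (Rle_or_lt t s); [assumption|]. exfalso; apply Hn; exists t; auto. }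
  assert (Hq : forall y, 0 <= F s0 y + eps*exp(M*s0)).
  { intros y. destruct (Rle_or_lt 0 (F s0 y + eps*exp(M*s0))) as [|Hneg]; [assumption|].
    exfalso. set (q := F s0 y + eps*exp(M*s0)) in *.
    assert (Hs0p : 0 < s0).
    { destruct (Req_dec s0 0) as [Hz|]; [|lra]. unfold q in Hneg. rewrite Hz in Hneg.
      rewrite Rmult_0_r, exp_0 in Hneg. specialize (H0 y). lra. }
    destruct (Hlip (Rabs y)) as [B [HB HBl]].
    set (h := Rmin s0 (- q / (2*(B+1)))).
    assert (Hh1 : h <= s0) by apply Rmin_l.
    assert (Hh2 : h <= - q / (2*(B+1))) by apply Rmin_r.
    assert (Hh0 : 0 < h).
    { apply Rmin_glb_lt; [lra|]. apply Rdiv_lt_0_compat; lra. }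
    assert (Hh3 : h * (2*(B+1)) <= - q).
    { apply Rmult_le_compat_r with (r := 2*(B+1)) in Hh2; [|lra].
      unfold Rdiv in Hh2. rewrite Rmult_assoc, Rinv_l in Hh2 by lra. lra. }
    assert (HPs := Hbelow (s0 - h) ltac:(lra) y).
    assert (Hl := HBl (s0 - h) s0 y ltac:(lra) ltac:(lra) ltac:(lra)).
    replace (s0 - h - s0) with (-h) in Hl by ring. rewrite Rabs_Ropp, (Rabs_right h) in Hl by lra.
    apply Rabs_le_between in Hl.
    assert (Hx := Hexp (s0 - h) s0 ltac:(lra)).
    assert (eps * exp (M*(s0-h)) <= eps * exp (M*s0)) by (apply Rmult_le_compat_l; lra).
    unfold q in *. nra. }
  destruct (classic (exists y0, F s0 y0 + eps * exp (M*s0) <= 0)) as [[y0 Hy0]|Hnone].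
  { exists s0, y0. assert (Hs0p : 0 < s0).
    { destruct (Req_dec s0 0) as [Hz|]; [|lra]. rewrite Hz in Hy0.
      rewrite Rmult_0_r, exp_0 in Hy0. specialize (H0 y0). lra. }
    split; [lra|]. split; [specialize (Hq y0); lra|]. split; [exact Hq|].
    exact Hbelow. }
  exfalso.
  assert (HPs0 : P s0).
  { intros y. destruct (Rlt_or_le 0 (F s0 y + eps * exp (M*s0))) as [|Hle]; [assumption|].
    exfalso; apply Hnone; exists y; exact Hle. }
  destruct (Hinf (eps/2) ltac:(lra)) as [X HX].
  set (X1 := Rabs X).
  assert (HXX : X <= X1) by apply Rle_abs.
  assert (HX1 : 0 <= X1) by apply Rabs_pos.
  destruct (continuity_ab_min (F s0) (-X1) X1 ltac:(lra)) as [ym [Hym Hymr]].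
  { intros c _; apply Hcy. }
  set (m := F s0 ym + eps * exp (M*s0)).
  assert (Hm : 0 < m) by apply HPs0.
  destruct (Hlip X1) as [B [HB HBl]].
  set (eta := m / (2*(B+1))).
  assert (Heta : 0 < eta) by (apply Rdiv_lt_0_compat; lra).
  assert (Heta2 : B * eta <= m / 2).
  { unfold eta. unfold Rdiv. replace (B * (m * / (2 * (B + 1)))) with ((B / (B+1)) * (m/2)) by (field; lra).
    assert (B / (B+1) <= 1).
    { apply Rmult_le_reg_r with (B+1); [lra|]. unfold Rdiv. rewrite Rmult_assoc, Rinv_l by lra. lra. }
    assert (0 <= B / (B+1)) by (apply Rdiv_le_0_compat; lra).
    unfold Rdiv in *. nra. }
  assert (Hup : forall s, s0 <= s <= Rmin (s0 + eta) T -> P s).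
  { intros s Hs. assert (Hs1 := Rmin_l (s0+eta) T). assert (Hs2 := Rmin_r (s0+eta) T).
    intros y. destruct (Rlt_or_le X1 (Rabs y)) as [Hy|Hy].
    - assert (-(eps/2) <= F s y) by (apply HX; lra).
      assert (1 <= exp (M*s)) by (apply Hexp1; lra). nra.
    - assert (Hl := HBl s s0 y ltac:(lra) ltac:(lra) Hy).
      rewrite (Rabs_right (s - s0)) in Hl by lra. apply Rabs_le_between in Hl.
      assert (F s0 ym <= F s0 y) by (apply Hym; apply Rabs_le_between; exact Hy).
      assert (Hx := Hexp s0 s ltac:(lra)).
      assert (eps * exp (M*s0) <= eps * exp (M*s)) by (apply Rmult_le_compat_l; lra).
      assert (B * (s - s0) <= B * eta) by (apply Rmult_le_compat_l; lra).
      unfold m in *. lra. }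
  set (t := Rmin (s0 + eta) T).
  assert (Ht1 := Rmin_l (s0+eta) T). assert (Ht2 := Rmin_r (s0+eta) T).
  assert (HEt : E t).
  { assert (0 <= t) by (unfold t; apply Rmin_glb; lra). split; [fold t in Ht1, Ht2; lra|]. intros s Hs.
    destruct (Rlt_or_le s s0); [apply Hbelow; lra| apply Hup; fold t; lra]. }
  assert (Hts := Hub t HEt).
  destruct (Rlt_or_le s0 T) as [Hlt|Hge].
  - assert (s0 < t). { unfold t. apply Rmin_glb_lt; lra. } lra.
  - apply Hnall. intros s Hs. destruct (Rlt_or_le s s0); [apply Hbelow; lra|].
    replace s with s0 by lra. exact HPs0.
Qed.

Lemma g_lip g a : Hg g -> 0 < a < 1 -> forall R0, exists L, 0 <= L /\
  forall x y, -R0 <= x <= R0 -> -R0 <= y <= R0 -> Rabs (g x a - g y a) <= L * Rabs (x - y).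
Proof.
  intros [[gu [ga [Hgu [_ [Hc _]]]]] _] Ha R0.
  apply (loc_lip (fun v => g v a) (fun u => gu u a)).
  - intros x. apply Hgu. lra.
  - intros x eps Heps. destruct (Hc x a ltac:(lra) eps Heps) as [del [Hdel H]].
    exists del. split; [lra|]. intros y [_ Hy]. simpl in *. unfold R_dist in *.
    apply H; [lra|exact Hy|]. rewrite Rminus_eq_0, Rabs_R0. lra.
Qed.

Lemma phi_lip (Phi : R -> R) : CR1 Phi -> forall R0, exists B, 0 <= B /\
  forall x y, -R0 <= x <= R0 -> -R0 <= y <= R0 -> Rabs (Phi x - Phi y) <= B * Rabs (x - y).
Proof.
  intros [Hd Hc]. apply (loc_lip Phi (Derive Phi)).
  - intros x. apply Derive_correct. apply Hd.
  - intros x. apply cont_of_continuous. apply Hc.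
Qed.

Lemma part1 (k a d : R) (g : R -> R -> R) (c : R) (Phi : R -> R) :
  0 < k -> 0 < a < 1 -> 0 < d -> Hg g ->
  CR1 Phi ->
  (forall xi, - (c * Derive Phi xi) =
     d * (k * Phi (xi + 1) - (k + 1) * Phi xi + Phi (xi - 1)) + g (Phi xi) a) ->
  is_lim Phi m_infty 0 -> is_lim Phi p_infty 1 ->
  (forall (cbar : R) (Psi : R -> R), CR1 Psi -> bddR Psi ->
     (exists xi, Psi xi > 0) ->
     (forall xi, Psi xi <= Phi xi) ->
     (forall xi, Iop g a d k cbar Psi xi <= 0) ->
     c <= cbar).
Proof.
  intros Hk Ha Hd Hg HPhi Heq Hlm Hlp cbar Psi HPsi [Mp HMp] [xi0 Hxi0] Hle HI.
  destruct (Rle_or_lt c cbar) as [|Hcc]; [assumption|exfalso].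
  set (del := c - cbar).
  assert (HMp0 : 0 <= Mp) by (specialize (HMp 0); assert (H := Rabs_pos (Psi 0)); lra).
  destruct (g_lip g a Hg Ha (Mp + 1)) as [L [HL HLl]].
  set (M := (L + 1) / del).
  assert (HM : 0 <= M) by (unfold M; apply Rdiv_le_0_compat; unfold del; lra).
  assert (HMd : del * M = L + 1) by (unfold M, del; field; lra).
  set (p0 := Psi xi0).
  set (eta := Rmin (p0/2) (1/2)).
  assert (Heta1 : eta <= p0/2) by apply Rmin_l.
  assert (Heta2 : eta <= 1/2) by apply Rmin_r.
  assert (Heta0 : 0 < eta) by (apply Rmin_glb_lt; unfold p0; lra).
  destruct (lim_m Phi 0 Hlm (p0/2) ltac:(unfold p0; lra)) as [Z HZ].
  set (T := Rmax 0 (xi0 - Z + 1)).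
  assert (HT0 : 0 <= T) by apply Rmax_l.
  assert (HT1 : xi0 - Z + 1 <= T) by apply Rmax_r.
  set (eps := eta * exp (- (M * T))).
  assert (Heps : 0 < eps) by (unfold eps; apply Rmult_lt_0_compat; [lra|apply exp_pos]).
  assert (HepsT : eps * exp (M * T) = eta).
  { unfold eps. rewrite Rmult_assoc, <- exp_plus. replace (- (M*T) + M*T) with 0 by ring.
    rewrite exp_0. ring. }
  destruct HPhi as [HPd HPc]. destruct HPsi as [HQd HQc].
  set (F := fun s y => Phi (y - s) - Psi y).
  destruct (core F T eps M HT0 Heps HM) as [Hall|[s0 [y0 [Hs0 [Hz [Hq Hbel]]]]]].
  - intros y. unfold F. rewrite Rminus_0_r. specialize (Hle y). lra.
  - intros e He.
    destruct (lim_m Phi 0 Hlm (e/2) ltac:(lra)) as [Z1 HZ1].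
    destruct (lim_p Phi 1 Hlp (e/2) ltac:(lra)) as [Z2 HZ2].
    exists (Rmax (Rabs Z1 + 1) (Rabs Z2 + T + 1)).
    intros s y Hs Hy.
    assert (H1 := Rmax_l (Rabs Z1 + 1) (Rabs Z2 + T + 1)).
    assert (H2 := Rmax_r (Rabs Z1 + 1) (Rabs Z2 + T + 1)).
    assert (HZ1a := Rle_abs (-Z1)). rewrite Rabs_Ropp in HZ1a.
    assert (HZ2a := Rle_abs Z2).
    unfold F. specialize (Hle y).
    destruct (Rle_or_lt 0 y) as [Hy0|Hy0].
    + rewrite (Rabs_right y) in Hy by lra.
      assert (A1 := HZ2 (y - s) ltac:(lra)). assert (A2 := HZ2 y ltac:(lra)).
      apply Rabs_def2 in A1. apply Rabs_def2 in A2. lra.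
    + rewrite (Rabs_left y) in Hy by lra.
      assert (A1 := HZ1 (y - s) ltac:(lra)). assert (A2 := HZ1 y ltac:(lra)).
      rewrite Rminus_0_r in A1, A2.
      apply Rabs_def2 in A1. apply Rabs_def2 in A2. lra.
  - intros X. destruct (phi_lip Phi (conj HPd HPc) (Rabs X + T)) as [B [HB HBl]].
    exists B. split; [exact HB|]. intros s1 s2 y Hs1 Hs2 Hy.
    apply Rabs_le_between in Hy. assert (HX := Rabs_pos X).
    unfold F. replace (Phi (y - s1) - Psi y - (Phi (y - s2) - Psi y)) with (Phi (y - s1) - Phi (y - s2)) by ring.
    replace (s1 - s2) with (- ((y - s1) - (y - s2))) by ring. rewrite Rabs_Ropp.
    assert (HXa := Rle_abs X). apply HBl; lra.
  - intros s y. apply cont_of_continuous.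
    apply (ex_derive_continuous (K:=R_AbsRing) (V:=R_NormedModule)).
    unfold F. auto_derive. split; [apply HPd|split; [apply HQd|exact I]].
  -
    specialize (Hall T ltac:(lra) xi0). unfold F in Hall. rewrite HepsT in Hall.
    assert (A := HZ (xi0 - T) ltac:(lra)). rewrite Rminus_0_r in A. apply Rabs_def2 in A.
    unfold p0 in *. lra.
  -
    unfold F in Hz, Hq, Hbel.
    set (E0 := eps * exp (M * s0)) in *.
    assert (HE0 : 0 < E0) by (unfold E0; apply Rmult_lt_0_compat; [lra|apply exp_pos]).
    assert (HE1 : E0 <= 1/2).
    { unfold E0. rewrite <- HepsT in Heta2. 
      assert (exp (M*s0) <= exp (M*T)).
      { destruct (Req_dec (M*s0) (M*T)) as [Hh|Hh]; [rewrite Hh; lra|]. left; apply exp_increasing. nra. }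
      assert (eps * exp (M*s0) <= eps * exp (M*T)) by (apply Rmult_le_compat_l; lra). lra. }
    set (xi := y0 - s0).
    assert (Hdy : is_derive (fun y => Phi (y - s0) - Psi y + E0) y0 (Derive Phi (y0 - s0) - Derive Psi y0)).
    { evar_last; [auto_derive; [repeat split; first [apply HPd|apply HQd] | reflexivity]|].
      try replace (y0 + - s0) with (y0 - s0) by ring. change (fun x : R => Phi x) with Phi. change (fun x : R => Psi x) with Psi. ring. }
    assert (Hp1 := deriv_left_min _ _ _ 1 Hdy ltac:(lra) (fun y _ => ltac:(specialize (Hq y); lra))).
    assert (Hp2 := deriv_right_min _ _ _ 1 Hdy ltac:(lra) (fun y _ => ltac:(specialize (Hq y); lra))).
    assert (Hds : is_derive (fun s => Phi (y0 - s) - Psi y0 + eps * exp (M * s)) s0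
                    (- Derive Phi (y0 - s0) + eps * M * exp (M*s0))).
    { evar_last; [auto_derive; [apply HPd|reflexivity]|]. replace (y0 + - s0) with (y0 - s0) by ring.
      change (fun x => Phi x) with Phi. ring. }
    assert (Hp3 := deriv_left_min _ _ _ s0 Hds ltac:(lra)
       (fun s Hs => ltac:(assert (HH := Hbel s ltac:(lra) y0); cbv beta; unfold E0 in *; lra))).
    fold xi in Hp1, Hp2, Hp3.
    set (p := Derive Phi xi) in *.
    assert (Hpp : Derive Psi y0 = p) by lra.
    assert (HpM : M * E0 <= p) by (unfold E0; lra).
    assert (HPe := Heq xi).
    assert (HIe := HI y0). unfold Iop in HIe. rewrite Hpp in HIe.
    assert (N1 := Hq (y0 + 1)). assert (N2 := Hq (y0 - 1)).
    replace (y0 + 1 - s0) with (xi + 1) in N1 by (unfold xi; ring).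
    replace (y0 - 1 - s0) with (xi - 1) in N2 by (unfold xi; ring).
    assert (Hxi : Phi xi - Psi y0 = - E0) by (unfold xi; lra).
    assert (Hr0 : -Mp <= Psi y0 <= Mp) by (specialize (HMp y0); apply Rabs_le_between in HMp; lra).
    assert (Hr1 : -(Mp+1) <= Psi y0 <= Mp+1) by lra.
    assert (Hr2 : -(Mp+1) <= Phi xi <= Mp+1) by lra.
    assert (Hgl := HLl (Phi xi) (Psi y0) Hr2 Hr1). rewrite Hxi, Rabs_Ropp, (Rabs_right E0) in Hgl by lra.
    apply Rabs_le_between in Hgl.
    assert (D1 : 0 <= d * k * (Phi (xi + 1) - Psi (y0 + 1) - (Phi xi - Psi y0))).
    { apply Rmult_le_pos; [nra|lra]. }
    assert (D2 : 0 <= d * (Phi (xi - 1) - Psi (y0 - 1) - (Phi xi - Psi y0))).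
    { apply Rmult_le_pos; lra. }
    assert (Hdp : del * (M * E0) <= del * p) by (apply Rmult_le_compat_l; unfold del; lra).
    rewrite <- Rmult_assoc, HMd in Hdp.
    unfold del in Hdp. fold p in HPe. lra.
Qed.

Lemma part2 (k a d : R) (g : R -> R -> R) (c : R) (Phi : R -> R) :
  0 < k -> 0 < a < 1 -> 0 < d -> Hg g ->
  CR1 Phi ->
  (forall xi, - (c * Derive Phi xi) =
     d * (k * Phi (xi + 1) - (k + 1) * Phi xi + Phi (xi - 1)) + g (Phi xi) a) ->
  is_lim Phi m_infty 0 -> is_lim Phi p_infty 1 ->
  (forall (cbar : R) (Psi : R -> R), CR1 Psi -> bddR Psi ->
     (exists xi, Psi xi < 1) ->
     (forall xi, Psi xi >= Phi xi) ->
     (forall xi, Iop g a d k cbar Psi xi >= 0) ->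
     c >= cbar).
Proof.
  intros Hk Ha Hd Hg HPhi Heq Hlm Hlp cbar Psi HPsi [Mp HMp] [xi0 Hxi0] Hle HI.
  destruct (Rle_or_lt cbar c) as [|Hcc]; [lra|exfalso].
  set (del := cbar - c).
  assert (HMp0 : 0 <= Mp) by (specialize (HMp 0); assert (H := Rabs_pos (Psi 0)); lra).
  destruct (g_lip g a Hg Ha (Mp + 1)) as [L [HL HLl]].
  set (M := (L + 1) / del).
  assert (HM : 0 <= M) by (unfold M; apply Rdiv_le_0_compat; unfold del; lra).
  assert (HMd : del * M = L + 1) by (unfold M, del; field; lra).
  set (p0 := 1 - Psi xi0).
  set (eta := Rmin (p0/2) (1/2)).
  assert (Heta1 : eta <= p0/2) by apply Rmin_l.
  assert (Heta2 : eta <= 1/2) by apply Rmin_r.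
  assert (Heta0 : 0 < eta) by (apply Rmin_glb_lt; unfold p0; lra).
  destruct (lim_p Phi 1 Hlp (p0/2) ltac:(unfold p0; lra)) as [Z HZ].
  set (T := Rmax 0 (Z - xi0 + 1)).
  assert (HT0 : 0 <= T) by apply Rmax_l.
  assert (HT1 : Z - xi0 + 1 <= T) by apply Rmax_r.
  set (eps := eta * exp (- (M * T))).
  assert (Heps : 0 < eps) by (unfold eps; apply Rmult_lt_0_compat; [lra|apply exp_pos]).
  assert (HepsT : eps * exp (M * T) = eta).
  { unfold eps. rewrite Rmult_assoc, <- exp_plus. replace (- (M*T) + M*T) with 0 by ring.
    rewrite exp_0. ring. }
  destruct HPhi as [HPd HPc]. destruct HPsi as [HQd HQc].
  set (F := fun s y => Psi y - Phi (y + s)).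
  destruct (core F T eps M HT0 Heps HM) as [Hall|[s0 [y0 [Hs0 [Hz [Hq Hbel]]]]]].
  - intros y. unfold F. rewrite Rplus_0_r. specialize (Hle y). lra.
  - intros e He.
    destruct (lim_m Phi 0 Hlm (e/2) ltac:(lra)) as [Z1 HZ1].
    destruct (lim_p Phi 1 Hlp (e/2) ltac:(lra)) as [Z2 HZ2].
    exists (Rmax (Rabs Z1 + T + 1) (Rabs Z2 + 1)).
    intros s y Hs Hy.
    assert (H1 := Rmax_l (Rabs Z1 + T + 1) (Rabs Z2 + 1)).
    assert (H2 := Rmax_r (Rabs Z1 + T + 1) (Rabs Z2 + 1)).
    assert (HZ1a := Rle_abs (-Z1)). rewrite Rabs_Ropp in HZ1a.
    assert (HZ2a := Rle_abs Z2).
    unfold F. specialize (Hle y).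
    destruct (Rle_or_lt 0 y) as [Hy0|Hy0].
    + rewrite (Rabs_right y) in Hy by lra.
      assert (A1 := HZ2 (y + s) ltac:(lra)). assert (A2 := HZ2 y ltac:(lra)).
      apply Rabs_def2 in A1. apply Rabs_def2 in A2. lra.
    + rewrite (Rabs_left y) in Hy by lra.
      assert (A1 := HZ1 (y + s) ltac:(lra)). assert (A2 := HZ1 y ltac:(lra)).
      rewrite Rminus_0_r in A1, A2.
      apply Rabs_def2 in A1. apply Rabs_def2 in A2. lra.
  - intros X. destruct (phi_lip Phi (conj HPd HPc) (Rabs X + T)) as [B [HB HBl]].
    exists B. split; [exact HB|]. intros s1 s2 y Hs1 Hs2 Hy.
    apply Rabs_le_between in Hy. assert (HX := Rabs_pos X).
    unfold F. replace (Psi y - Phi (y + s1) - (Psi y - Phi (y + s2))) with (- (Phi (y + s1) - Phi (y + s2))) by ring.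
    replace (s1 - s2) with ((y + s1) - (y + s2)) by ring. rewrite Rabs_Ropp.
    assert (HXa := Rle_abs X). apply HBl; lra.
  - intros s y. apply cont_of_continuous.
    apply (ex_derive_continuous (K:=R_AbsRing) (V:=R_NormedModule)).
    unfold F. auto_derive. repeat split; first [apply HPd|apply HQd].
  -
    specialize (Hall T ltac:(lra) xi0). unfold F in Hall. rewrite HepsT in Hall.
    assert (A := HZ (xi0 + T) ltac:(lra)). apply Rabs_def2 in A.
    unfold p0 in *. lra.
  -
    unfold F in Hz, Hq, Hbel.
    set (E0 := eps * exp (M * s0)) in *.
    assert (HE0 : 0 < E0) by (unfold E0; apply Rmult_lt_0_compat; [lra|apply exp_pos]).
    assert (HE1 : E0 <= 1/2).
    { unfold E0. rewrite <- HepsT in Heta2. 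
      assert (exp (M*s0) <= exp (M*T)).
      { destruct (Req_dec (M*s0) (M*T)) as [Hh|Hh]; [rewrite Hh; lra|]. left; apply exp_increasing. nra. }
      assert (eps * exp (M*s0) <= eps * exp (M*T)) by (apply Rmult_le_compat_l; lra). lra. }
    set (xi := y0 + s0).
    assert (Hdy : is_derive (fun y => Psi y - Phi (y + s0) + E0) y0 (Derive Psi y0 - Derive Phi (y0 + s0))).
    { evar_last; [auto_derive; [repeat split; first [apply HPd|apply HQd] | reflexivity]|].
      change (fun x : R => Phi x) with Phi. change (fun x : R => Psi x) with Psi. ring. }
    assert (Hp1 := deriv_left_min _ _ _ 1 Hdy ltac:(lra) (fun y _ => ltac:(specialize (Hq y); lra))).
    assert (Hp2 := deriv_right_min _ _ _ 1 Hdy ltac:(lra) (fun y _ => ltac:(specialize (Hq y); lra))).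
    assert (Hds : is_derive (fun s => Psi y0 - Phi (y0 + s) + eps * exp (M * s)) s0
                    (- Derive Phi (y0 + s0) + eps * M * exp (M*s0))).
    { evar_last; [auto_derive; [apply HPd|reflexivity]|].
      change (fun x => Phi x) with Phi. ring. }
    assert (Hp3 := deriv_left_min _ _ _ s0 Hds ltac:(lra)
       (fun s Hs => ltac:(assert (HH := Hbel s ltac:(lra) y0); cbv beta; unfold E0 in *; lra))).
    fold xi in Hp1, Hp2, Hp3.
    set (p := Derive Phi xi) in *.
    assert (Hpp : Derive Psi y0 = p) by lra.
    assert (HpM : M * E0 <= p) by (unfold E0; lra).
    assert (HPe := Heq xi).
    assert (HIe := HI y0). unfold Iop in HIe. rewrite Hpp in HIe.
    assert (N1 := Hq (y0 + 1)). assert (N2 := Hq (y0 - 1)).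
    replace (y0 + 1 + s0) with (xi + 1) in N1 by (unfold xi; ring).
    replace (y0 - 1 + s0) with (xi - 1) in N2 by (unfold xi; ring).
    assert (Hxi : Phi xi - Psi y0 = E0) by (unfold xi; lra).
    assert (Hr0 : -Mp <= Psi y0 <= Mp) by (specialize (HMp y0); apply Rabs_le_between in HMp; lra).
    assert (Hr1 : -(Mp+1) <= Psi y0 <= Mp+1) by lra.
    assert (Hr2 : -(Mp+1) <= Phi xi <= Mp+1) by lra.
    assert (Hgl := HLl (Phi xi) (Psi y0) Hr2 Hr1). rewrite Hxi, (Rabs_right E0) in Hgl by lra.
    apply Rabs_le_between in Hgl.
    assert (D1 : 0 <= d * k * (Psi (y0 + 1) - Phi (xi + 1) - (Psi y0 - Phi xi))).
    { apply Rmult_le_pos; [nra|lra]. }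
    assert (D2 : 0 <= d * (Psi (y0 - 1) - Phi (xi - 1) - (Psi y0 - Phi xi))).
    { apply Rmult_le_pos; lra. }
    assert (Hdp : del * (M * E0) <= del * p) by (apply Rmult_le_compat_l; unfold del; lra).
    rewrite <- Rmult_assoc, HMd in Hdp.
    unfold del in Hdp. fold p in HPe. lra.
Qed.

Theorem corollary3p3 (k a d : R) (g : R -> R -> R) (c : R) (Phi : R -> R) :
  0 < k -> 0 < a < 1 -> 0 < d -> Hg g ->
  CR1 Phi ->
  (forall xi, - (c * Derive Phi xi) =
     d * (k * Phi (xi + 1) - (k + 1) * Phi xi + Phi (xi - 1)) + g (Phi xi) a) ->
  is_lim Phi m_infty 0 -> is_lim Phi p_infty 1 ->
  (forall (cbar : R) (Psi : R -> R), CR1 Psi -> bddR Psi ->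
     (exists xi, Psi xi > 0) ->
     (forall xi, Psi xi <= Phi xi) ->
     (forall xi, Iop g a d k cbar Psi xi <= 0) ->
     c <= cbar) /\
  (forall (cbar : R) (Psi : R -> R), CR1 Psi -> bddR Psi ->
     (exists xi, Psi xi < 1) ->
     (forall xi, Psi xi >= Phi xi) ->
     (forall xi, Iop g a d k cbar Psi xi >= 0) ->
     c >= cbar).
Proof.
  intros. split.
  - eapply part1; eassumption.
  - eapply part2; eassumption.
Qed.
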